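(* For every graph $G$, $\operatorname{box}(G)\le 2\,MED(G)+2$.
   Context: A dominating edge set of $G$ is a set $D$ of edges such that every edge of $G$ not in $D$ shares an endpoint with some edge of $D$; $MED(G)$ is the minimum cardinality of a dominating edge set. The boxicity $\operatorname{box}(G)$ is the minimum $b$ such that $G$ is the intersection graph of axis-parallel boxes in $\mathbb{R}^b$ (products of $b$ closed intervals), one box per vertex. *)

(* Defs.v *)
From Stdlib Require Import Reals.
From mathcomp Require Import all_boot.

Set Implicit Arguments.
Unset Strict Implicit.
Unset Printing Implicit Defensive.

(* A finite simple graph: vertex set T (a finType), adjacency e : rel T,
   assumed symmetric and irreflexive in the theorem. *)

Definition is_edge (T : finType) (e : rel T) (d : {set T}) : bool :=
  [exists x, exists y, e x y && (d == [set x; y])].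

Definition dominating_edge_set (T : finType) (e : rel T) (D : {set {set T}}) : Prop :=
  (forall d, d \in D -> is_edge e d) /\
  (forall d, is_edge e d -> d \notin D ->
     exists2 d', d' \in D & d :&: d' != set0).

Definition is_MED (T : finType) (e : rel T) (m : nat) : Prop :=
  (exists D, dominating_edge_set e D /\ #|D| = m) /\
  (forall D, dominating_edge_set e D -> m <= #|D|).

(* A box representation of G in R^b: vertex v gets the box
   prod_{i<b} [lo v i, hi v i] (closed, nonempty intervals), and two
   distinct vertices are adjacent iff their boxes intersect. *)
Definition box_representation (T : finType) (e : rel T) (b : nat)
  (lo hi : T -> 'I_b -> R) : Prop :=
  (forall v i, Rle (lo v i) (hi v i)) /\
  (forall x y, x != y ->
     (e x y <-> forall i, Rle (lo x i) (hi y i) /\ Rle (lo y i) (hi x i))).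

Definition box_representable (T : finType) (e : rel T) (b : nat) : Prop :=
  exists lo hi, @box_representation T e b lo hi.

Definition is_boxicity (T : finType) (e : rel T) (k : nat) : Prop :=
  box_representable e k /\ (forall b, box_representable e b -> k <= b).

(* Main.v *)
Require Import Defs.
From Stdlib Require Import Reals.
From mathcomp Require Import all_boot.
From Stdlib Require Import Lra.

Lemma card_bigcup_le2 (T : finType) (D : {set {set T}}) :
  (forall d, d \in D -> #|d| <= 2) ->
  #|\bigcup_(d in D) d| <= 2 * #|D|.
Proof.
move=> H.
apply: (@leq_trans (\sum_(d in D) #|d|)).
  apply: (big_ind2 (fun (A : {set T}) n => #|A| <= n)) => //.
  - by rewrite cards0.
  - move=> A a B b HA HB; apply: leq_trans (leq_card_setU A B) _.
    exact: leq_add.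
apply: (@leq_trans (\sum_(d in D) 2)).
  by apply: leq_sum => d /H.
by rewrite sum_nat_const mulnC.
Qed.

Theorem theorem16 (T : finType) (e : rel T)
  (e_sym : symmetric e) (e_irr : irreflexive e) (k m : nat) :
  is_boxicity e k -> is_MED e m -> k <= 2 * m + 2.
Proof.
move=> [_ Hk] [[D [[HDe HDdom] HDm]] _].
apply: Hk.
case: (pickP (fun _ : T => true)) => [x0 _|T0]; last first.
  exists (fun _ _ => (IZR 0)), (fun _ _ => (IZR 0)); split.
    move=> _ _; apply: Rle_refl.
  by move=> x; have := T0 x.
pose S := \bigcup_(d in D) d.
have cover : forall x y, e x y -> (x \in S) || (y \in S).
  move=> x y exy.
  have ised : is_edge e [set x; y].
    by apply/existsP; exists x; apply/existsP; exists y; rewrite exy eqxx.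
  case: (boolP ([set x; y] \in D)) => Hin.
    by apply/orP; left; apply/bigcupP; exists [set x; y] => //; rewrite set21.
  have [d' Hd' /set0Pn [z]] := HDdom _ ised Hin.
  rewrite in_setI in_set2 => /andP [/orP [] /eqP -> Hz].
    by apply/orP; left; apply/bigcupP; exists d'.
  by apply/orP; right; apply/bigcupP; exists d'.
have cardS : #|S| <= 2 * m.
  rewrite -HDm; apply: card_bigcup_le2 => d /HDe /existsP [x /existsP [y /andP [_ /eqP ->]]].
  by rewrite cards2; case: (x != y).
pose sS := enum S.
pose n := size sS.
have hn : n < 2 * m + 2 by rewrite /n -cardE addn2; apply: leq_trans cardS _.
pose r (v : T) := INR (enum_rank v).
pose N := INR #|T|.
have rN : forall v, Rle (IZR 0) (r v) /\ Rle (r v) N.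
  move=> v; split; first exact: pos_INR.
  apply: le_INR; apply/leP; apply: ltnW; have := ltn_ord (enum_rank v); by [].

pose lo (v : T) (i : 'I_(2 * m + 2)) :=
  if i < n then (let s := nth x0 sS i in
                 if v == s then (IZR 0) else if e v s then (IZR 0) else (IZR 1))
  else (if v \in S then (IZR 0) else r v).
pose hi (v : T) (i : 'I_(2 * m + 2)) :=
  if i < n then (let s := nth x0 sS i in if v == s then (IZR 0) else (IZR 1))
  else (if v \in S then N else r v).
exists lo, hi; split.
  move=> v i; rewrite /lo /hi.
  case: (i < n) => /=.
    case: (v == _); first lra.
    case: (e v _); lra.
  case: (v \in S); have := rN v; lra.
move=> x y xy; split.
  move=> exy i; rewrite /lo /hi.
  case: (i < n) => /=.
    case: eqP => [xs|_].
      have -> : (y == nth x0 sS i) = false by rewrite -xs eq_sym; apply/negbTE.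
      by rewrite -xs e_sym exy; lra.
    case: eqP => [ys|_].
      by rewrite -ys exy; lra.
    case: (e x _); case: (e y _); lra.
  have := cover _ _ exy; have := rN x; have := rN y.
  by case: (x \in S); case: (y \in S) => //= *; lra.
move=> Hall.
case: (boolP (e x y)) => // nexy.
case: (boolP (x \in S)) => xS.
  have hi_n : index x sS < 2 * m + 2.
    by apply: ltn_trans hn; rewrite /n index_mem mem_enum.
  have [_ H2] := Hall (Ordinal hi_n).
  move: H2; rewrite /lo /hi /= index_mem mem_enum xS nth_index ?mem_enum //.
  rewrite eqxx eq_sym (negbTE xy) e_sym (negbTE nexy); lra.
case: (boolP (y \in S)) => yS.
  have hi_n : index y sS < 2 * m + 2.
    by apply: ltn_trans hn; rewrite /n index_mem mem_enum.
  have [H1 _] := Hall (Ordinal hi_n).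
  move: H1; rewrite /lo /hi /= index_mem mem_enum yS nth_index ?mem_enum //.
  rewrite eqxx (negbTE xy) (negbTE nexy); lra.
have [H1 H2] := Hall (Ordinal hn).
move: H1 H2; rewrite /lo /hi /= ltnn (negbTE xS) (negbTE yS) => H1 H2.
have : r x = r y by lra.
move/INR_eq => /val_inj /enum_rank_inj exy'.
by rewrite exy' eqxx in xy.
Qed.
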